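(* Let $T=(T_1,\dots,T_m)$ be a commuting $m$-tuple of bounded operators on a Hilbert space $\mathcal H$. Then the joint approximate point spectrum $\sigma_{ap}(T)$ is disjoint from the open ball $\mathbb B_{m_\infty(T)}=\{\lambda\in\mathbb C^m:\|\lambda\|_2<m_\infty(T)\}$, where $$m_\infty(T)=\sup_{k\ge1}\ \inf_{h\in\mathcal H,\ \|h\|=1}\big\|Q_T^k(I)h\big\|^{1/(2k)},\qquad Q_T^k(I)=\sum_{|\alpha|=k}\frac{k!}{\alpha!}\,T^{*\alpha}T^\alpha.$$
   Context: For $\alpha\in\mathbb N^m$, $|\alpha|=\sum\alpha_i$, $\alpha!=\prod\alpha_i!$, $T^\alpha=T_1^{\alpha_1}\cdots T_m^{\alpha_m}$ and $T^{*\alpha}=(T^\alpha)^*$. The joint approximate point spectrum $\sigma_{ap}(T)$ is the set of $\lambda\in\mathbb C^m$ for which there are unit vectors $h_n$ with $\sum_j\|(T_j-\lambda_j)h_n\|\to0$. *)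

(* Defs.v *)
From mathcomp Require Import all_boot all_order all_algebra.
From mathcomp Require Import all_classical all_reals all_analysis.
From mathcomp Require Import complex.
Set Implicit Arguments. Unset Strict Implicit. Unset Printing Implicit Defensive.
Import Order.TTheory GRing.Theory Num.Theory.
Local Open Scope ring_scope.
Local Open Scope classical_set_scope.

Section Hilbert.
Variable R : realType.
Variable V : lmodType R[i].
Variable ip : V -> V -> R[i].

Definition inner_product : Prop :=
  [/\ forall (a : R[i]) (x y z : V), ip (a *: x + y) z = a * ip x z + ip y z,
      forall x y : V, ip y x = (ip x y)^*,
      forall x : V, 0 <= ip x x &
      forall x : V, ip x x = 0 -> x = 0].

Definition hnorm (x : V) : R := Num.sqrt (complex.Re (ip x x)).

Definition complete_ip : Prop :=
  forall u : nat -> V,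
    (forall e : R, 0 < e -> exists N : nat, forall n k : nat,
        (N <= n)%N -> (N <= k)%N -> hnorm (u n - u k) < e) ->
    exists l : V, forall e : R, 0 < e -> exists N : nat, forall n : nat,
        (N <= n)%N -> hnorm (u n - l) < e.

Definition hilbert_space : Prop := inner_product /\ complete_ip.

Definition bounded_op (A : V -> V) : Prop :=
  (forall (a : R[i]) (x y : V), A (a *: x + y) = a *: A x + A y) /\
  exists M : R, forall x : V, hnorm (A x) <= M * hnorm x.

Definition is_adjoint (A B : V -> V) : Prop :=
  forall x y : V, ip (A x) y = ip x (B y).

Variable m : nat.

Definition Tpow (T : 'I_m -> V -> V) (alpha : 'I_m -> nat) : V -> V :=
  foldr (fun j f => iter (alpha j) (T j) \o f) id (enum 'I_m).

(* T^{*alpha} = (T^alpha)^* = T_m^{*alpha_m} ... T_1^{*alpha_1} *)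
Definition Tstarpow (Ts : 'I_m -> V -> V) (alpha : 'I_m -> nat) : V -> V :=
  foldr (fun j f => f \o iter (alpha j) (Ts j)) id (enum 'I_m).

(* Q_T^k(I) h = sum_{|alpha| = k} k!/alpha! T^{*alpha} T^alpha h;
   multi-indices alpha with |alpha| = k are encoded as functions
   'I_m -> 'I_k.+1 with coordinate sum k. *)
Definition QTk (T Ts : 'I_m -> V -> V) (k : nat) (h : V) : V :=
  \sum_(alpha : {ffun 'I_m -> 'I_k.+1} | (\sum_(j < m) (alpha j : nat))%N == k)
     (((k`!)%:R / (\prod_(j < m) ((alpha j : nat)`!)%:R)) : R[i])
       *: Tstarpow Ts (fun j => alpha j : nat) (Tpow T (fun j => alpha j : nat) h).

Definition m_infty (T Ts : 'I_m -> V -> V) : \bar R :=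
  ereal_sup [set ereal_inf
               [set ((hnorm (QTk T Ts k h)) `^ ((2 * k)%:R)^-1)%:E
                 | h in [set h : V | hnorm h = 1]]
             | k in [set k : nat | (1 <= k)%N]].

Definition sigma_ap (T : 'I_m -> V -> V) (lam : 'I_m -> R[i]) : Prop :=
  exists hn : nat -> V, (forall n, hnorm (hn n) = 1) /\
    ((fun n => \sum_(j < m) hnorm (T j (hn n) - lam j *: hn n)) : R^nat) @ \oo --> (0 : R^o).

Definition norm2 (lam : 'I_m -> R[i]) : R :=
  Num.sqrt (\sum_(j < m) complex.Re ((lam j)^* * lam j)).

End Hilbert.

(* Main.v *)
Require Import Defs.
From mathcomp Require Import all_boot all_order all_algebra.
From mathcomp Require Import all_classical all_reals all_analysis.
From mathcomp Require Import complex.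
From mathcomp Require Import ring lra zify.
Import Order.TTheory GRing.Theory Num.Theory.
Local Open Scope ring_scope.
Set Implicit Arguments. Unset Strict Implicit.

Section IP.
Variable R : realType.
Variable V : lmodType R[i].
Variable ip : V -> V -> R[i].
Hypothesis Hip : inner_product ip.

Local Notation Re := complex.Re.

Lemma Re_conj (z : R[i]) : Re (z^*) = Re z.
Proof. by case: z. Qed.
Lemma Re_add (z w : R[i]) : Re (z + w) = Re z + Re w.
Proof. by case: z; case: w. Qed.
Lemma Re_opp (z : R[i]) : Re (- z) = - Re z.
Proof. by case: z. Qed.
Lemma Re_realM (r : R) (w : R[i]) : Re (r%:C%C * w) = r * Re w.
Proof. case: w => a b /=. by rewrite !mul0r subr0. Qed.
Lemma Re_Mreal (r : R) (w : R[i]) : Re (w * r%:C%C) = Re w * r.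
Proof. by rewrite mulrC Re_realM mulrC. Qed.
Lemma ge0_real (z : R[i]) : 0 <= z -> z = (Re z)%:C%C.
Proof. rewrite lecE => /andP [/eqP H _]. case: z H => a b /= ->. by []. Qed.
Lemma ge0_Re (z : R[i]) : 0 <= z -> 0 <= Re z.
Proof. by rewrite lecE => /andP [_ H]. Qed.
Lemma conj_real (r : R) : (r%:C%C : R[i])^* = r%:C%C.
Proof. by apply/eqP; rewrite eq_complex /= oppr0 !eqxx. Qed.

Lemma conjD (a b : R[i]) : (a + b)^* = a^* + b^*.
Proof. exact: rmorphD. Qed.
Lemma conjM (a b : R[i]) : (a * b)^* = a^* * b^*.
Proof. exact: rmorphM. Qed.
Lemma conjK (a : R[i]) : (a^*)^* = a.
Proof. exact: conjCK. Qed.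

Lemma ipDZl a x y z : ip (a *: x + y) z = a * ip x z + ip y z.
Proof. by case: Hip => H _ _ _; apply: H. Qed.
Lemma ipCr x y : ip x y = (ip y x)^*.
Proof. by case: Hip => _ H _ _; apply: H. Qed.
Lemma ip_ge0 x : 0 <= ip x x.
Proof. by case: Hip => _ _ H _; apply: H. Qed.
Lemma ip_eq0 x : ip x x = 0 -> x = 0.
Proof. by case: Hip => _ _ _ H; apply: H. Qed.

Lemma ip0l z : ip 0 z = 0.
Proof.
have := ipDZl 1 0 0 z; rewrite scaler0 addr0 mul1r.
by rewrite -{1}[ip 0 z]addr0 => /addrI <-.
Qed.
Lemma ipDl x y z : ip (x + y) z = ip x z + ip y z.
Proof. by rewrite -[x]scale1r ipDZl mul1r scale1r. Qed.
Lemma ipZl a x z : ip (a *: x) z = a * ip x z.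
Proof. by rewrite -[a *: x]addr0 ipDZl ip0l addr0. Qed.
Lemma ipNl x z : ip (- x) z = - ip x z.
Proof. by rewrite -scaleN1r ipZl mulN1r. Qed.
Lemma ipDr x y z : ip x (y + z) = ip x y + ip x z.
Proof. by rewrite ipCr ipDl conjD -!ipCr. Qed.
Lemma ipZr a x y : ip x (a *: y) = a^* * ip x y.
Proof. by rewrite ipCr ipZl conjM -ipCr. Qed.
Lemma ipNr x z : ip x (- z) = - ip x z.
Proof. by rewrite -scaleN1r ipZr conjCN1 mulN1r. Qed.

Definition rip x y := Re (ip x y).
Definition nn x := rip x x.

Lemma ripC x y : rip x y = rip y x.
Proof. by rewrite /rip ipCr Re_conj. Qed.
Lemma ripDl x y z : rip (x + y) z = rip x z + rip y z.
Proof. by rewrite /rip ipDl Re_add. Qed.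
Lemma ripDr x y z : rip x (y + z) = rip x y + rip x z.
Proof. by rewrite /rip ipDr Re_add. Qed.
Lemma ripNl x z : rip (- x) z = - rip x z.
Proof. by rewrite /rip ipNl Re_opp. Qed.
Lemma ripNr x z : rip x (- z) = - rip x z.
Proof. by rewrite /rip ipNr Re_opp. Qed.
Lemma ripBl x y z : rip (x - y) z = rip x z - rip y z.
Proof. by rewrite ripDl ripNl. Qed.
Lemma ripBr x y z : rip x (y - z) = rip x y - rip x z.
Proof. by rewrite ripDr ripNr. Qed.
Lemma ripZl (r : R) x z : rip (r%:C%C *: x) z = r * rip x z.
Proof. by rewrite /rip ipZl Re_realM. Qed.
Lemma ripZr (r : R) x z : rip x (r%:C%C *: z) = r * rip x z.
Proof. by rewrite ripC ripZl ripC. Qed.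
Lemma rip0l z : rip 0 z = 0.
Proof. by rewrite /rip ip0l. Qed.
Lemma rip0r z : rip z 0 = 0.
Proof. by rewrite ripC rip0l. Qed.

Lemma nn_ge0 x : 0 <= nn x.
Proof. exact: ge0_Re (ip_ge0 x). Qed.
Lemma ipxx x : ip x x = (nn x)%:C%C.
Proof. exact: ge0_real (ip_ge0 x). Qed.
Lemma nn_eq0 x : nn x = 0 -> x = 0.
Proof. by move=> H; apply: ip_eq0; rewrite ipxx H. Qed.
Lemma nnD x y : nn (x + y) = nn x + 2 * rip x y + nn y.
Proof. rewrite /nn ripDl !ripDr (ripC y x). ring. Qed.
Lemma nnN x : nn (- x) = nn x.
Proof. by rewrite /nn ripNl ripNr opprK. Qed.
Lemma nnZ (r : R) x : nn (r%:C%C *: x) = r ^+ 2 * nn x.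
Proof. by rewrite /nn ripZl ripZr mulrA expr2. Qed.
Lemma Re_JM_ge0 (a : R[i]) : 0 <= Re (a^* * a).
Proof. apply: ge0_Re. by rewrite mulrC mul_conjC_ge0. Qed.
Lemma nnZc (a : R[i]) x : nn (a *: x) = Re (a^* * a) * nn x.
Proof.
by rewrite {1}/nn /rip ipZl ipZr ipxx mulrA Re_Mreal (mulrC a^*).
Qed.
Lemma nn0 : nn 0 = 0.
Proof. by rewrite /nn rip0l. Qed.

Lemma hnormE x : hnorm ip x = Num.sqrt (nn x).
Proof. by []. Qed.
Lemma hnorm_ge0 x : 0 <= hnorm ip x.
Proof. exact: sqrtr_ge0. Qed.
Lemma hnorm_sqr x : hnorm ip x ^+ 2 = nn x.
Proof. by rewrite hnormE sqr_sqrtr // nn_ge0. Qed.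

Lemma CS x y : rip x y ^+ 2 <= nn x * nn y.
Proof.
have key : forall t : R, 0 <= nn x + 2 * t * rip x y + t ^+ 2 * nn y.
  move=> t. have := nn_ge0 (x + t%:C%C *: y).
  by rewrite nnD ripZr nnZ mulrA (mulrC 2 t).
have hx := nn_ge0 x; have hy := nn_ge0 y.
have [hy0|hyp] := eqVneq (nn y) 0.
  rewrite hy0 mulr0.
  have [r0|rn0] := eqVneq (rip x y) 0; first by rewrite r0 expr2 mulr0.
  have := key (- (nn x + 1) / (2 * rip x y)).
  have E : 2 * (- (nn x + 1) / (2 * rip x y)) * rip x y = - (nn x + 1).
    by field; rewrite rn0.
  rewrite hy0 mulr0 addr0 E => H; exfalso; lra.
have hy' : 0 < nn y by rewrite lt_def hyp hy.
have := key (- rip x y / nn y).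
set r := rip x y => H.
have H2 : 0 <= nn x * nn y - r ^+ 2.
  have -> : nn x * nn y - r ^+ 2 = (nn x + 2 * (- r / nn y) * r + (- r / nn y) ^+ 2 * nn y) * nn y.
    by field; rewrite hyp.
  by rewrite mulr_ge0 // ltW.
by rewrite -subr_ge0.
Qed.

Lemma rip_le x y : rip x y <= hnorm ip x * hnorm ip y.
Proof.
have := CS x y; rewrite -!hnorm_sqr -exprMn => H.
have h0 : 0 <= hnorm ip x * hnorm ip y by rewrite mulr_ge0 // hnorm_ge0.
have [r0|r0] := lerP (rip x y) 0; first exact: le_trans r0 h0.
by rewrite -(ler_pXn2r (n:=2)) // nnegrE ltW.
Qed.

Lemma hnormD x y : hnorm ip (x + y) <= hnorm ip x + hnorm ip y.
Proof.
have h0 : 0 <= hnorm ip x + hnorm ip y by rewrite addr_ge0 // hnorm_ge0.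
rewrite -(ler_pXn2r (n:=2)) ?nnegrE ?hnorm_ge0 //.
rewrite hnorm_sqr nnD sqrrD !hnorm_sqr lerD2r lerD2l.
have := rip_le x y; lra.
Qed.

Lemma hnormN x : hnorm ip (- x) = hnorm ip x.
Proof. by rewrite !hnormE nnN. Qed.

Lemma hnormB_ge x y : hnorm ip x - hnorm ip y <= hnorm ip (x - y).
Proof.
rewrite lerBlDr. have := hnormD (x - y) y. by rewrite subrK.
Qed.

Definition ncr (a : R[i]) := Num.sqrt (Re (a^* * a)).

Lemma hnormZ (a : R[i]) x : hnorm ip (a *: x) = ncr a * hnorm ip x.
Proof. by rewrite !hnormE nnZc sqrtrM // Re_JM_ge0. Qed.

Lemma hnormZr (r : R) x : hnorm ip (r%:C%C *: x) = `|r| * hnorm ip x.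
Proof. by rewrite !hnormE nnZ sqrtrM ?sqr_ge0 // sqrtr_sqr. Qed.

End IP.

Section Key.
Variable R : realType.
Variable V : lmodType R[i].
Variable ip : V -> V -> R[i].
Hypothesis Hip : inner_product ip.
Variable P : V -> V.
Variables M c : R.
Hypothesis PD : forall x y, P (x + y) = P x + P y.
Hypothesis PZ : forall (r : R) x, P (r%:C%C *: x) = r%:C%C *: P x.
Hypothesis Psym : forall x y, rip ip (P x) y = rip ip x (P y).
Hypothesis Ppos : forall y, 0 <= rip ip (P y) y.
Hypothesis Pbd : forall y, rip ip (P y) y <= M * nn ip y.
Hypothesis Mpos : 0 < M.
Hypothesis cpos : 0 < c.
Hypothesis Hlow : forall x, c ^+ 2 * nn ip x <= nn ip (P x).

Local Notation rip := (rip ip).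
Local Notation nn := (nn ip).

Lemma P0 : P 0 = 0.
Proof. have := PD 0 0. rewrite addr0 => /eqP. by rewrite -subr_eq subrr eq_sym => /eqP. Qed.
Lemma PN x : P (- x) = - P x.
Proof. apply/eqP; rewrite -subr_eq0 opprK -PD addNr. by rewrite P0. Qed.
Lemma PB x y : P (x - y) = P x - P y.
Proof. by rewrite PD PN. Qed.

Definition Stat (t : R) := forall x, t * nn x <= rip (P x) x.

Lemma step (t : R) : 0 <= t -> Stat t ->
  forall x, (c ^+ 2 - t ^+ 2) * nn x <= (M + 2 * t) * (rip (P x) x - t * nn x).
Proof.
move=> t0 St x.
set z := P x - t%:C%C *: x.
set s := M^-1.
set y := x - s%:C%C *: z.
set p := rip (P x) x. set q := nn (P x). set a := nn x. set g := rip (P z) z.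
set w := nn z.
have E2 : rip (P x) z = q - t * p.
  by rewrite /z (ripBr Hip) (ripZr Hip).
have E3 : rip (P z) x = q - t * p.
  by rewrite Psym /z (ripBl Hip) (ripZl Hip) (ripC Hip x (P x)).
have E5 : rip x z = p - t * a.
  by rewrite /z (ripBr Hip) (ripZr Hip) (ripC Hip x (P x)).
have E6 : w = q - 2 * t * p + t ^+ 2 * a.
  rewrite /w /z (nnD Hip) (nnN Hip) (nnZ Hip) (ripNr Hip) (ripZr Hip) -/q -/a -/p. ring.
clearbody z.
have E1 : rip (P y) y = p - s * rip (P x) z - s * rip (P z) x + s ^+ 2 * g.
  rewrite /y PB PZ (ripBl Hip) !(ripBr Hip) !(ripZl Hip) !(ripZr Hip) -/p -/g. ring.
have E4 : nn y = a - 2 * s * rip x z + s ^+ 2 * w.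
  rewrite /y (nnD Hip) (nnN Hip) (nnZ Hip) (ripNr Hip) (ripZr Hip) -/a -/w. ring.
have Sy := St y.
have Hg : g <= M * w by apply: Pbd.
have w0 : 0 <= w by apply: (nn_ge0 Hip).
have a0 : 0 <= a by apply: (nn_ge0 Hip).
have H1 : 0 <= (p - t * a) - 2 * s * w + s ^+ 2 * (g - t * w).
  have -> : (p - t * a) - 2 * s * w + s ^+ 2 * (g - t * w) = rip (P y) y - t * nn y.
    rewrite E1 E4 E2 E3 E5 E6. ring.
  by rewrite subr_ge0.
have H2 : s ^+ 2 * (g - t * w) <= s * w.
  have -> : s * w = s ^+ 2 * (M * w) by rewrite /s expr2; field; rewrite gt_eqF.
  apply: ler_wpM2l; first exact: sqr_ge0.
  have : 0 <= t * w by rewrite mulr_ge0.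
  lra.
have H3 : w <= M * (p - t * a).
  have H4 : s * w <= p - t * a by lra.
  have -> : w = M * (s * w) by rewrite /s mulrA divff ?mul1r // gt_eqF.
  by apply: ler_wpM2l => //; apply: ltW.
have Hq := Hlow x. rewrite -/q -/a in Hq.
have : q = w + 2 * t * (p - t * a) + t ^+ 2 * a by rewrite E6; ring.
nra.
Qed.


Lemma Stat0 : Stat 0.
Proof. by move=> x; rewrite mul0r. Qed.

Lemma Stat_mono t t' : t' <= t -> Stat t -> Stat t'.
Proof.
move=> le St x; apply: le_trans (St x).
by apply: ler_wpM2r => //; apply: (nn_ge0 Hip).
Qed.

Lemma Stat_next t : 0 <= t -> Stat t -> Stat (t + (c ^+ 2 - t ^+ 2) / (M + 2 * t)).
Proof.
move=> t0 St x.
have Mt : 0 < M + 2 * t by rewrite ltr_wpDr // mulr_ge0.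
have := step t0 St x.
move=> H.
have : (c ^+ 2 - t ^+ 2) / (M + 2 * t) * nn x <= rip (P x) x - t * nn x.
  by rewrite mulrAC ler_pdivrMr // [X in _ <= X]mulrC.
rewrite mulrDl. lra.
Qed.

Lemma Stat_lt (e : R) : 0 < e -> e <= c -> Stat (c - e).
Proof.
move=> e0 ec.
set eta := c * e / (M + 2 * c).
have Mc : 0 < M + 2 * c by rewrite ltr_wpDr // mulr_ge0 // ltW.
have eta0 : 0 < eta by rewrite /eta divr_gt0 // mulr_gt0.
have Hn : forall n : nat, Stat (Num.min (n%:R * eta) (c - e)).
  elim=> [|n IH].
    apply: Stat_mono Stat0. by rewrite mul0r ge_min lexx.
  set t := Num.min (n%:R * eta) (c - e) in IH.
  have t0 : 0 <= t.
    rewrite /t le_min; apply/andP; split; last by lra.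
    by apply: mulr_ge0; [exact: ler0n | exact: ltW].
  have tce : t <= c - e by rewrite /t ge_min lexx orbT.
  have Mt : 0 < M + 2 * t by rewrite ltr_wpDr // mulr_ge0.
  apply: Stat_mono (Stat_next t0 IH).
  have Hd : eta <= (c ^+ 2 - t ^+ 2) / (M + 2 * t).
    rewrite ler_pdivlMr //.
    apply: (@le_trans _ _ (eta * (M + 2 * c))).
      by apply: ler_wpM2l; [exact: ltW | lra].
    rewrite /eta mulrAC -mulrA divff ?mulr1 ?gt_eqF //.
    have : 0 <= t by []. nra.
  apply: (@le_trans _ _ (t + eta)); last by rewrite lerD2l.
  have [H|H] := lerP (n%:R * eta) (c - e).
    have -> : t = n%:R * eta by rewrite /t; apply/min_idPl.
    rewrite ge_min; apply/orP; left. by rewrite -nat1r mulrDl mul1r addrC.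
  have -> : t = c - e by rewrite /t; apply/min_idPr; apply: ltW.
  rewrite ge_min; apply/orP; right. rewrite lerDl. exact: ltW.
have ce0 : 0 <= (c - e) / eta by rewrite divr_ge0 ?subr_ge0 // ltW.
have := Hn (Num.Def.archi_bound ((c - e) / eta)).
have : c - e <= (Num.Def.archi_bound ((c - e) / eta))%:R * eta.
  by rewrite -ler_pdivrMr //; apply: ltW; apply: archi_boundP.
by move=> /min_idPr ->.
Qed.

Lemma key_lemma : Stat c.
Proof.
move=> x.
have a0 := nn_ge0 Hip x.
have [a00|ap] := eqVneq (nn x) 0; first by rewrite a00 mulr0.
have apos : 0 < nn x by rewrite lt_def ap a0.
apply/ler_addgt0Pr => e e0.
set eps := Num.min c (e / nn x).
have eps0 : 0 < eps by rewrite /eps lt_min cpos divr_gt0.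
have epsc : eps <= c by rewrite /eps ge_min lexx.
have epse : eps * nn x <= e.
  rewrite -ler_pdivlMr //. by rewrite /eps ge_min lexx orbT.
have := Stat_lt eps0 epsc x.
rewrite mulrBl. lra.
Qed.

End Key.

Section Ops.
Variable R : realType.
Variable V : lmodType R[i].
Variable ip : V -> V -> R[i].
Hypothesis Hip : inner_product ip.

Definition lin (A : V -> V) := forall (a : R[i]) x y, A (a *: x + y) = a *: A x + A y.

Section LinA.
Variable A : V -> V.
Hypothesis HA : lin A.
Lemma lin0 : A 0 = 0.
Proof.
have := HA 1 0 0. rewrite scaler0 addr0 scale1r => /eqP.
by rewrite -subr_eq subrr eq_sym => /eqP.
Qed.
Lemma linD x y : A (x + y) = A x + A y.
Proof. by rewrite -[x]scale1r HA !scale1r. Qed.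
Lemma linZ a x : A (a *: x) = a *: A x.
Proof. by rewrite -[a *: x]addr0 HA lin0 addr0. Qed.
Lemma linN x : A (- x) = - A x.
Proof. by rewrite -scaleN1r linZ scaleN1r. Qed.
Lemma linB x y : A (x - y) = A x - A y.
Proof. by rewrite linD linN. Qed.
End LinA.

Lemma lin_id : lin id.
Proof. by []. Qed.
Lemma lin_comp A B : lin A -> lin B -> lin (A \o B).
Proof. by move=> HA HB a x y /=; rewrite HB HA. Qed.
Lemma lin_iter n A : lin A -> lin (iter n A).
Proof.
move=> HA; elim: n => [|n IH] a x y //=. by rewrite IH HA.
Qed.

Lemma bounded_nonneg A : bounded_op ip A ->
  exists M, 0 <= M /\ forall x, hnorm ip (A x) <= M * hnorm ip x.
Proof.
case=> _ [M HM]; exists `|M|; split => // x.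
apply: le_trans (HM x) _. apply: ler_wpM2r; first exact: hnorm_ge0.
exact: ler_norm.
Qed.

Lemma bounded_id : bounded_op ip id.
Proof. split; first exact: lin_id. by exists 1 => x; rewrite mul1r. Qed.

Lemma bounded_comp A B : bounded_op ip A -> bounded_op ip B -> bounded_op ip (A \o B).
Proof.
move=> HA HB; split; first exact: lin_comp (proj1 HA) (proj1 HB).
have [MA [MA0 HMA]] := bounded_nonneg HA.
have [MB [MB0 HMB]] := bounded_nonneg HB.
exists (MA * MB) => x /=. apply: le_trans (HMA _) _.
rewrite -mulrA. exact: ler_wpM2l.
Qed.

Lemma bounded_iter n A : bounded_op ip A -> bounded_op ip (iter n A).
Proof.
move=> HA; elim: n => [|n IH] /=; first exact: bounded_id.
exact: (bounded_comp HA IH).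
Qed.

Lemma ip_ext u v : (forall z, ip z u = ip z v) -> u = v.
Proof.
move=> H; apply/eqP; rewrite -subr_eq0; apply/eqP; apply: (ip_eq0 Hip).
by rewrite (ipDr Hip) (ipNr Hip) H subrr.
Qed.

Lemma adjoint_lin A B : lin A -> is_adjoint ip A B -> lin B.
Proof.
move=> HA HAB a x y; apply: ip_ext => z.
by rewrite -HAB (ipDr Hip) (ipZr Hip) !HAB (ipDr Hip) (ipZr Hip).
Qed.

Lemma adjoint_iter n A B : is_adjoint ip A B -> is_adjoint ip (iter n A) (iter n B).
Proof.
move=> H; elim: n => [|n IH] x y //=.
by rewrite H IH -iterSr.
Qed.

End Ops.

Section TOps.
Variable R : realType.
Variable V : lmodType R[i].
Variable ip : V -> V -> R[i].
Hypothesis Hip : inner_product ip.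
Variable m : nat.
Variables T Ts : 'I_m -> V -> V.
Hypothesis HT : forall j, bounded_op ip (T j).
Hypothesis HTs : forall j, is_adjoint ip (T j) (Ts j).

Definition TP (al : 'I_m -> nat) (s : seq 'I_m) : V -> V :=
  foldr (fun j f => iter (al j) (T j) \o f) id s.
Definition TSP (al : 'I_m -> nat) (s : seq 'I_m) : V -> V :=
  foldr (fun j f => f \o iter (al j) (Ts j)) id s.

Lemma TP_bounded al s : bounded_op ip (TP al s).
Proof.
elim: s => [|j s IH] /=; first exact: bounded_id.
exact: bounded_comp (bounded_iter _ (HT j)) IH.
Qed.

Lemma TP_adj al s : is_adjoint ip (TP al s) (TSP al s).
Proof.
elim: s => [|j s IH] x y //=.
by rewrite (adjoint_iter _ (HTs j)) IH.
Qed.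

Lemma Ts_lin j : lin (Ts j).
Proof. apply: (adjoint_lin Hip _ (HTs j)). by case: (HT j). Qed.

Lemma TSP_lin al s : lin (TSP al s).
Proof.
elim: s => [|j s IH] /=; first exact: lin_id.
exact: lin_comp IH (lin_iter _ (Ts_lin j)).
Qed.

Lemma rip_sum (I : Type) (r : seq I) (Pr : pred I) (F : I -> V) y :
  rip ip (\sum_(i <- r | Pr i) F i) y = \sum_(i <- r | Pr i) rip ip (F i) y.
Proof.
apply: (big_rec2 (fun a b => rip ip a y = b)); first exact: rip0l.
by move=> i a b _ <-; rewrite (ripDl Hip).
Qed.

Variable k : nat.

Definition cr (al : {ffun 'I_m -> 'I_k.+1}) : R :=
  (k`!)%:R / (\prod_(j < m) ((al j : nat)`!)%:R).

Lemma coefE (al : {ffun 'I_m -> 'I_k.+1}) : ((k`!)%:R / (\prod_(j < m) ((al j : nat)`!)%:R) : R[i]) = (cr al)%:C%C.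
Proof.
rewrite /cr rmorphM fmorphV rmorph_nat rmorph_prod.
by under [in RHS]eq_bigr => j _ do rewrite rmorph_nat.
Qed.

Lemma cr_ge0 (al : {ffun 'I_m -> 'I_k.+1}) : 0 <= cr al.
Proof. by rewrite /cr divr_ge0 // ?ler0n // prodr_ge0 // => j _; rewrite ler0n. Qed.

Local Notation Q := (QTk T Ts k).
Local Notation al' al := (fun j => (al j : nat)).

Lemma QE x : Q x = \sum_(al : {ffun 'I_m -> 'I_k.+1} | (\sum_(j < m) (al j : nat))%N == k)
  (cr al)%:C%C *: TSP (al' al) (enum 'I_m) (TP (al' al) (enum 'I_m) x).
Proof. by apply: eq_bigr => al _; rewrite coefE. Qed.

Lemma Q_lin : lin Q.
Proof.
move=> a x y; rewrite !QE scaler_sumr -big_split; apply: eq_bigr => al _ /=.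
rewrite (proj1 (TP_bounded _ _)) (TSP_lin _ _) !scalerDr !scalerA.
by rewrite mulrC.
Qed.

Lemma rip_TSP al s z y : rip ip (TSP al s z) y = rip ip (TP al s y) z.
Proof. by rewrite (ripC Hip) /rip -TP_adj. Qed.

Lemma rip_Q x y : rip ip (Q x) y = \sum_(al : {ffun 'I_m -> 'I_k.+1} | (\sum_(j < m) (al j : nat))%N == k)
  cr al * rip ip (TP (al' al) (enum 'I_m) y) (TP (al' al) (enum 'I_m) x).
Proof.
rewrite QE rip_sum; apply: eq_bigr => al _.
by rewrite (ripZl Hip) rip_TSP.
Qed.

Lemma Q_sym x y : rip ip (Q x) y = rip ip x (Q y).
Proof.
rewrite (ripC Hip x) !rip_Q; apply: eq_bigr => al _.
by rewrite (ripC Hip).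
Qed.

Lemma Q_pos y : 0 <= rip ip (Q y) y.
Proof.
rewrite rip_Q; apply: sumr_ge0 => al _.
by rewrite mulr_ge0 ?cr_ge0 // nn_ge0.
Qed.

Lemma nn_bound A : bounded_op ip A -> exists M, 0 <= M /\ forall y, nn ip (A y) <= M * nn ip y.
Proof.
move=> /bounded_nonneg [M [M0 HM]]; exists (M ^+ 2); split; first exact: sqr_ge0.
move=> y; rewrite -!(hnorm_sqr Hip) -exprMn.
by rewrite ler_pXn2r ?nnegrE ?hnorm_ge0 ?mulr_ge0 ?hnorm_ge0.
Qed.

Lemma Q_bd : exists M, 0 < M /\ forall y, rip ip (Q y) y <= M * nn ip y.
Proof.
have H : forall al : {ffun 'I_m -> 'I_k.+1}, exists M, 0 <= M /\
    forall y, nn ip (TP (al' al) (enum 'I_m) y) <= M * nn ip y.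
  move=> al; exact: nn_bound (TP_bounded _ _).
have [Mf HMf] := boolp.choice H.
exists (1 + \sum_(al : {ffun 'I_m -> 'I_k.+1} | (\sum_(j < m) (al j : nat))%N == k) cr al * Mf al).
split.
  apply: ltr_wpDr => //; apply: sumr_ge0 => al _.
  by rewrite mulr_ge0 ?cr_ge0 //; case: (HMf al).
move=> y; rewrite rip_Q mulrDl mul1r mulr_suml.
apply: (@le_trans _ _ (\sum_(al : {ffun 'I_m -> 'I_k.+1} | (\sum_(j < m) (al j : nat))%N == k) cr al * Mf al * nn ip y)).
  apply: ler_sum => al _. rewrite -mulrA ler_wpM2l ?cr_ge0 //.
  by case: (HMf al) => _ ->.
by rewrite lerDr nn_ge0.
Qed.

End TOps.

Section Multinom.
Variable R : numFieldType.

Definition consf (X : finType) n (a : X) (g : {ffun 'I_n -> X}) : {ffun 'I_n.+1 -> X} :=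
  [ffun i => if unlift ord0 i is Some j then g j else a].

Lemma consf0 (X : finType) n (a : X) (g : {ffun 'I_n -> X}) : consf a g ord0 = a.
Proof. by rewrite ffunE unlift_none. Qed.
Lemma consfS (X : finType) n (a : X) (g : {ffun 'I_n -> X}) j : consf a g (lift ord0 j) = g j.
Proof. by rewrite ffunE liftK. Qed.

Lemma split_ffun (X : finType) (n : nat) (Pf : pred {ffun 'I_n.+1 -> X})
  (F : {ffun 'I_n.+1 -> X} -> R) :
  \sum_(f | Pf f) F f = \sum_(a : X) \sum_(g : {ffun 'I_n -> X} | Pf (consf a g)) F (consf a g).
Proof.
rewrite (reindex (fun p : X * {ffun 'I_n -> X} => consf p.1 p.2)) /=.
  by rewrite pair_big_dep.
apply: onW_bij. exists (fun f : {ffun 'I_n.+1 -> X} => ((f ord0 : X), ([ffun j : 'I_n => f (lift ord0 j)] : {ffun 'I_n -> X}))).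
  case=> a g /=. rewrite consf0; congr pair. by apply/ffunP => j; rewrite ffunE consfS.
move=> f; apply/ffunP => i; rewrite ffunE /=. by case: unliftP => [j ->|->]; rewrite ?ffunE.
Qed.


Lemma fact_neq0 n : (n`!)%:R != 0 :> R.
Proof. by rewrite pnatr_eq0 -lt0n fact_gt0. Qed.

Lemma multinom m : forall K k (q : 'I_m -> R), (k <= K)%N ->
  \sum_(al : {ffun 'I_m -> 'I_K.+1} | (\sum_(j < m) (al j : nat))%N == k)
    (k`!)%:R / (\prod_(j < m) ((al j : nat)`!)%:R) * \prod_(j < m) q j ^+ al j
  = (\sum_(j < m) q j) ^+ k.
Proof.
elim: m => [|m IH] K k q kK.
  set f0 : {ffun 'I_0 -> 'I_K.+1} := [ffun j : 'I_0 => (ord0 : 'I_K.+1)].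
  have all_eq : forall al : {ffun 'I_0 -> 'I_K.+1}, al = f0 by move=> al; apply/ffunP => -[].
  rewrite big_mkcond (big_pred1 f0); last by move=> al; rewrite /= (all_eq al) eqxx.
  rewrite !big_ord0. case: k kK => [|k] _ /=; first by rewrite divr1 mulr1.
  by rewrite expr0n.
rewrite split_ffun.
have sumS : forall (a : 'I_K.+1) (g : {ffun 'I_m -> 'I_K.+1}),
    (\sum_(j < m.+1) (consf a g j : nat))%N = (a + \sum_(j < m) (g j : nat))%N.
  by move=> a g; rewrite big_ord_recl consf0; under eq_bigr => j _ do rewrite consfS.
have prodF : forall (a : 'I_K.+1) (g : {ffun 'I_m -> 'I_K.+1}),
    \prod_(j < m.+1) ((consf a g j : nat)`!)%:R = (a`!)%:R * \prod_(j < m) ((g j : nat)`!)%:R :> R.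
  by move=> a g; rewrite big_ord_recl consf0; under eq_bigr => j _ do rewrite consfS.
have prodQ : forall (a : 'I_K.+1) (g : {ffun 'I_m -> 'I_K.+1}),
    \prod_(j < m.+1) q j ^+ (consf a g j) = q ord0 ^+ a * \prod_(j < m) q (lift ord0 j) ^+ (g j).
  by move=> a g; rewrite big_ord_recl consf0; under eq_bigr => j _ do rewrite consfS.
transitivity (\sum_(a < K.+1 | (a < k.+1)%N)
   ('C(k, a)%:R * q ord0 ^+ a * (\sum_(j < m) q (lift ord0 j)) ^+ (k - a)%N)).
  rewrite [RHS]big_mkcond; apply: eq_bigr => a _.
  case: ifP => ak.
    rewrite -(IH K (k - a)%N (fun j => q (lift ord0 j))); last by lia.
    rewrite mulr_sumr; apply: eq_big => g.
      rewrite sumS; apply/eqP/eqP; lia.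
    move=> _. rewrite prodF prodQ.
    have PF0 : \prod_(j < m) ((g j : nat)`!)%:R != 0 :> R.
      by apply/prodf_neq0 => j _; apply: fact_neq0.
    have Hk : (k`!)%:R = 'C(k, a)%:R * ((a`!)%:R * ((k - a)%N`!)%:R) :> R.
      by rewrite -!natrM bin_fact //; lia.
    rewrite Hk. field. by rewrite PF0 fact_neq0.
  rewrite big_pred0 // => g. rewrite sumS. apply/negbTE/eqP. lia.
rewrite -(big_ord_widen K.+1 (fun a : nat => 'C(k, a)%:R * q ord0 ^+ a * (\sum_(j < m) q (lift ord0 j)) ^+ (k - a)%N)) // [in RHS]big_ord_recl addrC exprDn. apply: eq_bigr => a _.
by rewrite -mulr_natl; ring.
Qed.

End Multinom.

Section P6wrap.
Local Open Scope classical_set_scope.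

Lemma cvg_eps (R : realType) (u : nat -> R) : (u : R^nat) @ \oo --> (0 : R^o) ->
  forall e : R, 0 < e -> exists N, forall n, (N <= n)%N -> `|u n| < e.
Proof.
move=> /cvgrPdist_lt H e e0. have := H e e0. case=> N _ HN. exists N => n Nn.
have := HN n Nn. by rewrite /= sub0r normrN.
Qed.

Lemma eventually_all (I : finType) (P : I -> nat -> Prop) :
  (forall i, exists N, forall n, (N <= n)%N -> P i n) ->
  exists N, forall n, (N <= n)%N -> forall i, P i n.
Proof.
move=> H.
suff : forall s : seq I, exists N, forall n, (N <= n)%N -> forall i, i \in s -> P i n.
  case/(_ (enum I)) => N HN; exists N => n Nn i. by apply: HN; rewrite // mem_enum.
elim=> [|i s [N HN]]; first by exists 0%N.
have [N' HN'] := H i.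
exists (maxn N N') => n Nn j; rewrite inE => /orP [/eqP ->|js].
  by apply: HN'; apply: leq_trans Nn; apply: leq_maxr.
by apply: HN => //; apply: leq_trans Nn; apply: leq_maxl.
Qed.

Section Approx.
Variable R : realType.
Variable V : lmodType R[i].
Variable ip : V -> V -> R[i].
Hypothesis Hip : inner_product ip.
Variable m : nat.
Variables T Ts : 'I_m -> V -> V.
Hypothesis HT : forall j, bounded_op ip (T j).
Variable lam : 'I_m -> R[i].
Variable hn : nat -> V.
Hypothesis Hhn1 : forall n, hnorm ip (hn n) = 1.
Hypothesis Hcv : ((fun n => \sum_(j < m) hnorm ip (T j (hn n) - lam j *: hn n)) : R^nat)
   @ \oo --> (0 : R^o).

Definition good (A : V -> V) (a : R[i]) := forall e : R, 0 < e -> exists N,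
  forall n, (N <= n)%N -> hnorm ip (A (hn n) - a *: hn n) < e.

Lemma hnorm0 : hnorm ip (0 : V) = 0.
Proof. by rewrite hnormE (nn0 Hip) sqrtr0. Qed.

Lemma good_id : good id 1.
Proof. by move=> e e0; exists 0%N => n _ /=; rewrite scale1r subrr hnorm0. Qed.

Lemma good_T j : good (T j) (lam j).
Proof.
move=> e e0; have [N HN] := cvg_eps Hcv e0; exists N => n Nn.
have := HN n Nn. rewrite ger0_norm; last by apply: sumr_ge0 => i _; apply: hnorm_ge0.
move=> H; apply: le_lt_trans H. rewrite (bigD1 j) //= lerDl. by apply: sumr_ge0 => i _; apply: hnorm_ge0.
Qed.

Lemma good_comp A B a b : bounded_op ip A -> good A a -> good B b -> good (A \o B) (a * b).
Proof.
move=> HA gA gB e e0.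
have [M [M0 HM]] := bounded_nonneg HA.
have nb0 : 0 <= ncr b by apply: sqrtr_ge0.
have e1p : 0 < e / (2 * (M + 1)) by rewrite divr_gt0 // mulr_gt0 // ltr_wpDl.
have e2p : 0 < e / (2 * (ncr b + 1)) by rewrite divr_gt0 // mulr_gt0 // ltr_wpDl.
have [N1 HN1] := gB _ e1p.
have [N2 HN2] := gA _ e2p.
exists (maxn N1 N2) => n Nn /=.
have H1 := HN1 n (leq_trans (leq_maxl _ _) Nn).
have H2 := HN2 n (leq_trans (leq_maxr _ _) Nn).
set x := hn n in H1 H2 *.
have E : A (B x) - (a * b) *: x = A (B x - b *: x) + b *: (A x - a *: x).
  rewrite (linB (proj1 HA)) (linZ (proj1 HA)) scalerBr scalerA (mulrC b a).
  by rewrite addrA subrK.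
rewrite E. have HD := hnormD Hip (A (B x - b *: x)) (b *: (A x - a *: x)). apply: le_lt_trans HD _.
rewrite (hnormZ Hip).
have Ha := HM (B x - b *: x).
set u := hnorm ip (B x - b *: x) in H1 Ha.
set v := hnorm ip (A x - a *: x) in H2 *.
have u0 : 0 <= u by apply: hnorm_ge0.
have v0 : 0 <= v by apply: hnorm_ge0.
have K1 : M * u <= e / 2.
  apply: (@le_trans _ _ ((M + 1) * u)); first by rewrite ler_wpM2r // lerDl.
  have -> : e / 2 = (M + 1) * (e / (2 * (M + 1))) by field; rewrite gt_eqF // ltr_wpDl.
  by apply: ler_wpM2l; [rewrite addr_ge0 | exact: ltW].
have K2 : ncr b * v < e / 2.
  apply: (@le_lt_trans _ _ ((ncr b + 1) * v)); first by rewrite ler_wpM2r // lerDl.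
  have -> : e / 2 = (ncr b + 1) * (e / (2 * (ncr b + 1))) by field; rewrite gt_eqF // ltr_wpDl.
  by rewrite ltr_pM2l // ltr_wpDl.
lra.
Qed.

Lemma good_iter n A a : bounded_op ip A -> good A a -> good (iter n A) (a ^+ n).
Proof.
move=> HA gA; elim: n => [|n IH]; first by rewrite expr0; exact: good_id.
by rewrite exprS; exact: good_comp HA gA IH.
Qed.

Definition LP (al : 'I_m -> nat) (s : seq 'I_m) : R[i] :=
  foldr (fun j r => lam j ^+ al j * r) 1 s.

Lemma good_TP al s : good (TP T al s) (LP al s).
Proof.
elim: s => [|j s IH] /=; first exact: good_id.
apply: good_comp IH; first exact: bounded_iter.
exact: good_iter (HT j) (good_T j).
Qed.

Lemma conj1 : (1 : R[i])^* = 1.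
Proof. exact: conjC1. Qed.

Lemma Re_JM_real (a : R[i]) : a^* * a = (complex.Re (a^* * a))%:C%C.
Proof. by apply: ge0_real; rewrite mulrC mul_conjC_ge0. Qed.

Lemma ReJM_mul (a b : R[i]) :
  complex.Re ((a * b)^* * (a * b)) = complex.Re (a^* * a) * complex.Re (b^* * b).
Proof.
have -> : (a * b)^* * (a * b) = (a^* * a) * (b^* * b) by rewrite conjM; ring.
by rewrite Re_JM_real (Re_JM_real b) Re_realM.
Qed.

Lemma ReJM_exp (a : R[i]) n : complex.Re ((a ^+ n)^* * a ^+ n) = complex.Re (a^* * a) ^+ n.
Proof.
elim: n => [|n IH]; first by rewrite !expr0 conj1 mulr1.
by rewrite !exprS ReJM_mul IH.
Qed.

Lemma ReJM_LP al s : complex.Re ((LP al s)^* * LP al s) =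
  \prod_(j <- s) complex.Re ((lam j)^* * lam j) ^+ al j.
Proof.
elim: s => [|j s IH]; first by rewrite big_nil (_ : LP al [::] = 1) // conj1 mulr1.
by rewrite big_cons (_ : LP al (j :: s) = lam j ^+ al j * LP al s) // ReJM_mul ReJM_exp IH.
Qed.

Lemma hnorm_TP_le al s n :
  hnorm ip (TP T al s (hn n)) <= ncr (LP al s) + hnorm ip (TP T al s (hn n) - LP al s *: hn n).
Proof.
have := hnormD Hip (LP al s *: hn n) (TP T al s (hn n) - LP al s *: hn n).
by rewrite addrC subrK (hnormZ Hip) Hhn1 mulr1.
Qed.

End Approx.

End P6wrap.
Unset Implicit Arguments. Set Strict Implicit.

Lemma powR_inv_exp (R : realType) (z : R) (n : nat) : 0 <= z -> (0 < n)%N ->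
  (z `^ (n%:R)^-1) ^+ n = z.
Proof.
move=> z0 n0. rewrite -powR_mulrn ?powR_ge0 // -powRrM mulVf ?powRr1 //.
by rewrite pnatr_eq0 -lt0n.
Qed.

Arguments powR_inv_exp {R z n}.

Theorem lemma3p6 (R : realType) (V : lmodType R[i]) (ip : V -> V -> R[i])
  (m : nat) (T Ts : 'I_m -> V -> V) :
  hilbert_space ip ->
  (forall j, bounded_op ip (T j)) ->
  (forall j, is_adjoint ip (T j) (Ts j)) ->
  (forall i j, T i \o T j = T j \o T i) ->
  forall lam : 'I_m -> R[i],
    ((norm2 lam)%:E < m_infty ip T Ts)%E -> ~ sigma_ap ip T lam.
Proof.
move=> Hh HT HTs _ lam Hlt [hn [Hhn1 Hcv]].
have Hip := proj1 Hh.
set r := norm2 lam.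
have r0 : 0 <= r by apply: sqrtr_ge0.
case: (ereal_sup_gt Hlt) => _ [k k1 <-] ry.
set Q := QTk T Ts k.
set N := (2 * k)%N.
have k1' : (1 <= k)%N := k1.
have N0 : (0 < N)%N by rewrite /N; lia.
have [x [rx Hx]] : exists x : R, r < x /\ forall h, hnorm ip h = 1 ->
    x <= hnorm ip (Q h) `^ (N%:R)^-1.
  move: ry; set S := ereal_inf _ => ry.
  have lb : forall h, hnorm ip h = 1 -> (S <= (hnorm ip (Q h) `^ (N%:R)^-1)%:E)%E.
    by move=> h h1; apply: ereal_inf_lbound; exists h.
  case: S lb ry => [x| |] lb ry.
  - exists x; split; first by rewrite -lte_fin.
    by move=> h h1; rewrite -lee_fin; apply: lb.
  - by have := lb (hn 0%N) (Hhn1 0%N).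
  - by [].
have x0 : 0 < x by lra.
set c := x ^+ N.
have cpos : 0 < c by rewrite /c exprn_gt0.
have rc : r ^+ N < c by rewrite /c ltr_pXn2r // nnegrE ltW.
have Hunit : forall h, hnorm ip h = 1 -> c <= hnorm ip (Q h).
  move=> h h1; have H := Hx h h1.
  rewrite -(powR_inv_exp (hnorm_ge0 ip (Q h)) N0) /c ler_pXn2r // nnegrE ?powR_ge0 //.
  exact: ltW.
have QL := Q_lin Hip HT HTs k.
have Hlow : forall z, c ^+ 2 * nn ip z <= nn ip (Q z).
  move=> z.
  have [nz0|nzp] := eqVneq (nn ip z) 0.
    by rewrite nz0 mulr0; exact: (nn_ge0 Hip).
  have nzpos : 0 < nn ip z by rewrite lt_def nzp (nn_ge0 Hip).
  set s := hnorm ip z.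
  have s0 : 0 < s by rewrite /s hnormE sqrtr_gt0.
  have h1 : hnorm ip ((s^-1)%:C%C *: z) = 1.
    by rewrite (hnormZr Hip) ger0_norm ?invr_ge0 ?ltW // mulVf ?gt_eqF.
  have := Hunit _ h1. rewrite /Q (linZ QL) (hnormZr Hip) ger0_norm; last by rewrite invr_ge0 ltW.
  move=> H.
  have H' : c * s <= hnorm ip (Q z).
    have := ler_wpM2r (ltW s0) H. by rewrite mulrAC mulVf ?gt_eqF // mul1r.
  rewrite -(hnorm_sqr Hip z) -(hnorm_sqr Hip (Q z)) -exprMn.
  by rewrite ler_pXn2r // nnegrE ?hnorm_ge0 // mulr_ge0 // ?ltW // hnorm_ge0.
have [M [Mpos HMbd]] := Q_bd Hip HT HTs k.
have St := key_lemma Hip (linD QL) (fun r z => linZ QL _ z) (Q_sym Hip HTs k) (Q_pos Hip HTs k) HMbd Mpos cpos Hlow.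
set q := fun j => complex.Re ((lam j)^* * lam j).
set ncrA := fun al : {ffun 'I_m -> 'I_k.+1} => ncr (LP lam (fun j => al j : nat) (enum 'I_m)).
have ncrA0 : forall al, 0 <= ncrA al by move=> al; apply: sqrtr_ge0.
set L := \sum_(al : {ffun 'I_m -> 'I_k.+1} | (\sum_(j < m) (al j : nat))%N == k) cr R al * ncrA al ^+ 2.
have HL : L = r ^+ N.
  have -> : r ^+ N = (\sum_(j < m) q j) ^+ k.
    rewrite /r /norm2 /N exprM sqr_sqrtr //.
    by apply: sumr_ge0 => j _; apply: Re_JM_ge0.
  rewrite -(multinom q (leqnn k)). apply: eq_bigr => al _.
  rewrite /ncrA sqr_sqrtr ?Re_JM_ge0 // ReJM_LP. by rewrite enumT.
have Lc : L < c by rewrite HL.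
set S := \sum_(al : {ffun 'I_m -> 'I_k.+1} | (\sum_(j < m) (al j : nat))%N == k) cr R al * (2 * ncrA al + 1).
have S0 : 0 <= S.
  by apply: sumr_ge0 => al _; rewrite mulr_ge0 ?cr_ge0 // addr_ge0 ?mulr_ge0.
set d := Num.min 1 ((c - L) / (S + 1)).
have d0 : 0 < d by rewrite /d lt_min ltr01 divr_gt0 ?subr_gt0 // ltr_wpDl.
have d1 : d <= 1 by rewrite /d ge_min lexx.
have dS : d * S < c - L.
  have H1 : d * (S + 1) <= c - L.
    rewrite -ler_pdivlMr ?ltr_wpDl //. by rewrite /d ge_min lexx orbT.
  have : 0 < c - L by rewrite subr_gt0.
  lra.
have [Nn HNn] := eventually_all (fun al : {ffun 'I_m -> 'I_k.+1} =>
   good_TP Hip HT Hcv (fun j => al j : nat) (enum 'I_m) d0).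
have Hn := HNn Nn (leqnn Nn).
have := St (hn Nn).
rewrite -(hnorm_sqr Hip) Hhn1 expr1n mulr1 /Q rip_Q //.
move=> Hc.
have Hup : \sum_(al : {ffun 'I_m -> 'I_k.+1} | (\sum_(j < m) (al j : nat))%N == k)
    cr R al * rip ip (TP T (fun j => al j : nat) (enum 'I_m) (hn Nn)) (TP T (fun j => al j : nat) (enum 'I_m) (hn Nn))
  <= L + d * S.
  rewrite /L /S mulr_sumr -big_split /=.
  apply: ler_sum => al _.
  have cr0 := cr_ge0 R al.
  have Hle := hnorm_TP_le Hip T lam Hhn1 (fun j => al j : nat) (enum 'I_m) Nn.
  have Hd := Hn al.
  set h := hnorm ip (TP T (fun j => al j : nat) (enum 'I_m) (hn Nn)) in Hle.
  set dd := hnorm ip (TP T (fun j => al j : nat) (enum 'I_m) (hn Nn) - LP lam (fun j => al j : nat) (enum 'I_m) *: hn Nn) in Hle Hd.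
  have h0 : 0 <= h by apply: hnorm_ge0.
  have dd0 : 0 <= dd by apply: hnorm_ge0.
  have -> : rip ip (TP T (fun j => al j : nat) (enum 'I_m) (hn Nn)) (TP T (fun j => al j : nat) (enum 'I_m) (hn Nn)) = h ^+ 2.
    by rewrite /h (hnorm_sqr Hip).
  rewrite [X in _ <= X](_ : _ = cr R al * (ncrA al ^+ 2 + d * (2 * ncrA al + 1))); last by ring.
  apply: ler_wpM2l => //.
  have a0 := ncrA0 al. rewrite -/(ncrA al) in Hle.
  set a := ncrA al in Hle a0 *.
  nra.
have : c < c by apply: le_lt_trans Hc (le_lt_trans Hup _); lra.
by rewrite ltxx.
Qed.
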